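(* For every finite group $G$, every block of the power semigroup $\mathcal{P}(G)$ divides $G$. Consequently, for every pseudovariety of groups $\mathbf{H}$, one has $\mathbf{PH}\subseteq\mathbf{BH}$.
   Context: For a finite semigroup $S$, $\mathcal{P}(S)$ is the semigroup of all subsets of $S$ under $AB=\{ab: a\in A, b\in B\}$. A semigroup $A$ divides $B$ if $A$ is a homomorphic image of a subsemigroup of $B$. Blocks: let $U$ be the union of all subgroups of a finite semigroup $S$ and let $\rho$ be the smallest equivalence relation on $U$ containing the restrictions to $U$ of Green's relations $\mathcal{L}$ and $\mathcal{R}$. A block of $S$ is the Rees quotient $T/I$, where $T$ is the subsemigroup of $S$ generated by a $\rho$-class and $I$ is the ideal of $T$ consisting of the elements of $T$ not lying in the $\mathcal{D}$-class (of $S$) of the generators. For a pseudovariety of groups $\mathbf{H}$: $\mathbf{PH}$ is the pseudovariety of semigroups generated by all $\mathcal{P}(G)$ with $G\in\mathbf{H}$, and $\mathbf{BH}$ is the class of all finite semigroups all of whose blocks belong to $\mathbf{H}$ (blocks here being regarded as members of $\mathbf{H}$ when they divide a group of $\mathbf{H}$, i.e. $\mathbf{BV}$ is the class of finite semigroups whose blocks lie in $\mathbf{V}$, for $\mathbf{V}$ the pseudovariety considered). *)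

(* Defs.v *)
From mathcomp Require Import all_boot all_fingroup.
Set Implicit Arguments. Unset Strict Implicit. Unset Printing Implicit Defensive.

(* Most definitions below only need the operation;
   associativity is assumed where the paper assumes a semigroup. *)

Section Semigroup.
Variables (S : finType) (op : S -> S -> S).

(* x lies in S^1 y, resp. y S^1 *)
Definition lmult (x y : S) : bool := (x == y) || [exists a, op a y == x].
Definition rmult (x y : S) : bool := (x == y) || [exists a, op y a == x].

Definition greenL (x y : S) : bool := lmult x y && lmult y x.
Definition greenR (x y : S) : bool := rmult x y && rmult y x.
Definition greenD (x y : S) : bool := [exists z, greenL x z && greenR z y].

Definition is_subgroup (A : {set S}) : bool :=
  [forall a in A, forall b in A, op a b \in A] &&
  [exists e in A, [forall a in A, (op e a == a) && (op a e == a)] &&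
                  [forall a in A, exists b in A, (op a b == e) && (op b a == e)]].

Definition grpU : {set S} := [set x | [exists A : {set S}, (x \in A) && is_subgroup A]].

Definition rho_edge : rel S :=
  [rel x y | [&& x \in grpU, y \in grpU & greenL x y || greenR x y]].
Definition rho (x y : S) : bool := [&& x \in grpU, y \in grpU & connect rho_edge x y].

Definition rho_class (x : S) : {set S} := [set y | rho x y].

Definition op_closed (B : {set S}) : bool := [forall a in B, forall b in B, op a b \in B].
Definition gen_subsemigroup (C : {set S}) : {set S} :=
  \bigcap_(B : {set S} | op_closed B && (C \subset B)) B.

Lemma gen_subsemigroup_closed C a b :
  a \in gen_subsemigroup C -> b \in gen_subsemigroup C -> op a b \in gen_subsemigroup C.
Proof.
move=> /bigcapP Ha /bigcapP Hb; apply/bigcapP => B HB.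
have aB := Ha B HB; have bB := Hb B HB.
by case/andP: HB => /forall_inP /(_ a aB) /forall_inP /(_ b bB).
Qed.

(* The block determined by x \in U:  T = <rho-class of x>,
   I = elements of T not D-related (in S) to x, block = Rees quotient T/I. *)
Definition blockT (x : S) : {set S} := gen_subsemigroup (rho_class x).
Definition blockI (x : S) : {set S} := [set y in blockT x | ~~ greenD y x].

(* Concrete model of the Rees quotient T/I: elements of T \ I together with
   one fixed representative of I (which plays the role of the zero, present
   only when I is nonempty). *)
Definition rees_pred (x : S) : pred S :=
  [pred y | (y \in blockT x) && ((y \notin blockI x) || (Some y == [pick z in blockI x]))].

Definition block_car (x : S) : finType := {y : S | rees_pred x y}.

Definition rees_collapse (x p : S) : S :=
  if p \in blockI x then odflt p [pick z in blockI x] else p.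

Lemma rees_collapseP x p : p \in blockT x -> rees_pred x (rees_collapse x p).
Proof.
move=> pT; rewrite /rees_collapse /rees_pred inE /=; case: ifP => pI.
  case: pickP => [z zI|/(_ p)]; last by rewrite pI.
  by rewrite eqxx orbT andbT; move: zI; rewrite inE => /andP[].
by rewrite pT pI.
Qed.

Definition block_op (x : S) (u v : block_car x) : block_car x :=
  exist _ (rees_collapse x (op (sval u) (sval v)))
    (rees_collapseP (gen_subsemigroup_closed (andP (svalP u)).1 (andP (svalP v)).1)).

End Semigroup.

Definition sdivides (A : finType) (opA : A -> A -> A) (B : finType) (opB : B -> B -> B) : Prop :=
  exists V : {set B},
    op_closed opB V /\
    exists f : B -> A,
      (forall u v, u \in V -> v \in V -> f (opB u v) = opA (f u) (f v)) /\
      (forall a : A, exists2 u, u \in V & f u = a).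

Definition pow_op (gT : finGroupType) (A B : {set gT}) : {set gT} := (A * B)%g.

(* Pseudovarieties of groups, as classes of finite groups (whole carriers of
   finGroupTypes): nonempty, closed under division and binary direct products. *)
Definition group_pseudovariety (H : finGroupType -> Prop) : Prop :=
  [/\ exists gT, H gT,
      (forall gT rT : finGroupType, H gT -> sdivides (@mulg rT) (@mulg gT) -> H rT) &
      (forall gT1 gT2 : finGroupType, H gT1 -> H gT2 -> H (gT1 * gT2)%type)].

Definition powprod_car (n : nat) (Gs : 'I_n -> finGroupType) : finType :=
  {dffun forall i : 'I_n, {set Gs i}}.
Definition powprod_op (n : nat) (Gs : 'I_n -> finGroupType)
    (f g : powprod_car Gs) : powprod_car Gs :=
  [ffun i => pow_op (f i) (g i)].

Definition inPH (H : finGroupType -> Prop) (S : finType) (op : S -> S -> S) : Prop :=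
  exists n (Gs : 'I_n -> finGroupType),
    (forall i, H (Gs i)) /\ sdivides op (@powprod_op n Gs).

Definition inBH (H : finGroupType -> Prop) (S : finType) (op : S -> S -> S) : Prop :=
  forall x : S, x \in grpU op ->
    exists gT : finGroupType, H gT /\ sdivides (@block_op S op x) (@mulg gT).

(* Main.v *)
Require Import Defs.
From mathcomp Require Import all_boot all_fingroup zify.
Set Implicit Arguments. Unset Strict Implicit. Unset Printing Implicit Defensive.
Local Open Scope group_scope.

Section Gen.
Variables (S : finType) (op : S -> S -> S).

Lemma gen_sub (C B : {set S}) : op_closed op B -> C \subset B ->
  gen_subsemigroup op C \subset B.
Proof. by move=> cB sCB; apply: bigcap_inf; rewrite cB sCB. Qed.

Lemma gen_ext (C : {set S}) : C \subset gen_subsemigroup op C.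
Proof. by apply/subsetP=> y yC; apply/bigcapP=> B /andP[_ /subsetP]; apply. Qed.

Lemma greenD_refl x : greenD op x x.
Proof. by apply/existsP; exists x; rewrite /greenL /greenR /lmult /rmult eqxx. Qed.

Lemma connect_inv (e : rel S) (P : pred S) :
  (forall u w, e u w -> P u -> P w) -> forall x y, connect e x y -> P x -> P y.
Proof.
move=> He x y /connectP[p pth ->]; elim: p x pth => //= z p IH x /andP[exz pth] Px.
exact: IH pth (He _ _ exz Px).
Qed.

Lemma gen_div (x : S) (gT : finGroupType) (V : {set gT}) (h : gT -> S) (u0 : gT) :
  u0 \in V -> op_closed (@mulg gT) V ->
  (forall y, y \in blockT op x -> greenD op y x) ->
  (forall u, u \in V -> h u \in blockT op x) ->
  (forall u v, u \in V -> v \in V -> h (u * v) = op (h u) (h v)) ->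
  (forall y, y \in blockT op x -> exists2 u, u \in V & h u = y) ->
  sdivides (@block_op S op x) (@mulg gT).
Proof.
move=> u0V Vcl TD hT hM hon.
have rpE y : y \in blockT op x -> rees_pred op x y.
  by move=> yT; rewrite /rees_pred inE /= yT /blockI inE yT TD.
have colE p : p \in blockT op x -> rees_collapse op x p = p.
  by move=> pT; rewrite /rees_collapse /blockI inE pT TD.
pose d : block_car op x := exist _ (h u0) (rpE _ (hT _ u0V)).
pose f u : block_car op x := insubd d (h u).
have fE u : u \in V -> val (f u) = h u.
  by move=> uV; rewrite /f insubdK //; exact: (rpE _ (hT _ uV)).
exists V; split=> //; exists f; split.
  move=> u v uV vV; apply: val_inj; rewrite /= fE; last first.
    by move: Vcl => /forall_inP /(_ u uV) /forall_inP /(_ v vV).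
  have uvV : u * v \in V.
    by move: Vcl => /forall_inP /(_ u uV) /forall_inP /(_ v vV).
  by rewrite !fE // -hM // colE //; exact: (hT _ uvV).
move=> a; have aT : val a \in blockT op x by case/andP: (svalP a).
have [u uV hu] := hon _ aT; exists u => //; apply: val_inj; by rewrite fE.
Qed.
End Gen.
Section PowG.
Variable gT : finGroupType.
Implicit Types A B : {set gT}.

Lemma mul0s A : set0 * A = set0.
Proof. by apply/setP=> y; rewrite inE; apply/mulsgP=> [[a b]]; rewrite inE. Qed.
Lemma muls0 A : A * set0 = set0.
Proof. by apply/setP=> y; rewrite inE; apply/mulsgP=> [[a b _]]; rewrite inE. Qed.

Lemma idem_group A : A * A = A -> A != set0 -> group_set A.
Proof.
move=> AA /set0Pn[a aA]; rewrite /group_set AA subxx andbT.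
have pA k : a ^+ k.+1 \in A.
  elim: k => [|k IH]; first by rewrite expg1.
  by rewrite expgS -AA mem_mulg.
by rewrite -(expg_order a); case: #[a] (order_gt0 a) => // k _; apply: pA.
Qed.

Lemma coset_mul (K : {group gT}) g h : h \in 'N(K) -> (g *: K) * (h *: K) = (g * h) *: K.
Proof.
move=> hN; rewrite -mulgA [K * _]mulgA (norm_rlcoset hN) -mulgA mulGid.
by rewrite lcosetM.
Qed.

Lemma grpU_pow X : X \in grpU (@pow_op gT) ->
  X = set0 \/ exists (K : {group gT}) x, x \in 'N(K) /\ X = x *: K.
Proof.
rewrite inE => /existsP [A /andP [XA /andP[_ /exists_inP [E EA /andP [idE invE]]]]].
move: (idE) => /forall_inP /(_ X XA) /andP [/eqP EX /eqP XE].
move: (idE) => /forall_inP /(_ E EA) /andP [/eqP EE _].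
move: invE => /forall_inP /(_ X XA) /exists_inP [Y YA /andP[/eqP XY /eqP YX]].
rewrite /pow_op in EX XE EE XY YX.
have [E0|En0] := eqVneq E set0.
  by left; rewrite -EX E0 mul0s.
right; pose K := Group (idem_group EE En0).
have XK : X * K = X by [].
have KX : K * X = X by [].
have [x xX] : exists x, x \in X.
  apply/set0Pn; apply/eqP => X0; move: (En0); by rewrite -XY X0 mul0s eqxx.
have [y yY] : exists y, y \in Y.
  apply/set0Pn; apply/eqP => Y0; move: (En0); by rewrite -XY Y0 muls0 eqxx.
have cX : #|X| <= #|K|.
  rewrite -(card_rcoset X y); apply: subset_leq_card.
  by rewrite /= -XY mulgS // sub1set.
have XxK : X = x *: K.
  apply/eqP; rewrite eq_sym eqEcard card_lcoset cX andbT.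
  by rewrite -XK mulSg // sub1set.
have XKx : X = K :* x.
  apply/eqP; rewrite eq_sym eqEcard card_rcoset cX andbT.
  by rewrite -KX mulgS // sub1set.
exists K, x; split=> //; apply/normP.
by rewrite conjsgE -XKx XxK lcosetK.
Qed.
End PowG.
Section Part1.
Variable gT : finGroupType.
Implicit Types A B : {set gT}.
Local Notation opP := (@pow_op gT).

Lemma absR A B z : (z *: B) * A = z *: B -> 1 \in B -> A \subset B.
Proof.
move=> E B1; apply/subsetP=> k kA.
have : z * k \in z *: B * A by rewrite mem_mulg // mem_lcoset mulVg.
by rewrite E mem_lcoset mulKg.
Qed.

Lemma absL A B z : A * (B :* z) = B :* z -> 1 \in B -> A \subset B.
Proof.
move=> E B1; apply/subsetP=> k kA.
have : k * z \in A * (B :* z) by rewrite mem_mulg // mem_rcoset mulgV.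
by rewrite E mem_rcoset mulgK.
Qed.

Lemma greenL_cosets (K : {set gT}) g h : greenL opP (g *: K) (h *: K).
Proof.
apply/andP; split; apply/orP; right; apply/existsP.
  by exists [set g * h^-1]; rewrite /pow_op -lcosetM mulgKV.
by exists [set h * g^-1]; rewrite /pow_op -lcosetM mulgKV.
Qed.

Lemma greenR_refl (y : {set gT}) : greenR opP y y.
Proof. by rewrite /greenR /rmult eqxx. Qed.

Section Coset.
Variable K : {group gT}.
Definition Good : {set {set gT}} := [set Z | [exists g in 'N(K), Z == g *: K]].

Lemma GoodP Z : reflect (exists2 g, g \in 'N(K) & Z = g *: K) (Z \in Good).
Proof.
rewrite inE; apply: (iffP exists_inP) => [[g gN /eqP]|[g gN ->]]; by exists g.
Qed.

Lemma Good_closed : op_closed opP Good.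
Proof.
apply/forall_inP=> a /GoodP[g gN ->]; apply/forall_inP=> b /GoodP[h hN ->].
by apply/GoodP; exists (g * h); rewrite ?groupM // /pow_op coset_mul.
Qed.

Lemma Good_subgroup : is_subgroup opP Good.
Proof.
rewrite /is_subgroup; apply/andP; split; first exact: Good_closed.
apply/exists_inP; exists (K : {set gT}).
  by apply/GoodP; exists 1; rewrite ?group1 ?lcoset1.
apply/andP; split; apply/forall_inP=> a /GoodP[g gN ->].
  rewrite /pow_op -mulgA mulGid eqxx andbT.
  by rewrite -{1}(lcoset1 K) coset_mul // mul1g.
apply/exists_inP; exists (g^-1 *: K); first by apply/GoodP; exists g^-1; rewrite ?groupV.
by rewrite /pow_op !coset_mul ?groupV // mulgV mulVg lcoset1 eqxx.
Qed.

Lemma Good_U Z : Z \in Good -> Z \in grpU opP.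
Proof. by move=> ZG; rewrite inE; apply/existsP; exists Good; rewrite ZG Good_subgroup. Qed.

Lemma Good_edge u w : u \in Good -> rho_edge opP u w -> w \in Good.
Proof.
case/GoodP=> g gN -> /and3P[_ wU /orP[]].
  case/andP=> /orP[/eqP<- _|/existsP[a /eqP au]]; first by apply/GoodP; exists g.
  case/orP=> [/eqP->|/existsP[b /eqP bw]]; first by apply/GoodP; exists g.
  case: (grpU_pow wU) => [w0|[K' [z [zN wE]]]].
    by move: au; rewrite w0 /pow_op muls0 => /setP/(_ g); rewrite inE mem_lcoset mulVg group1.
  have s1 : (K : {set gT}) \subset K'.
    apply: (absR (z := z)) (group1 K'); rewrite -wE -bw /pow_op -mulgA.
    by rewrite -{2}(lcoset1 K) coset_mul ?group1 // mulg1.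
  have s2 : (K' : {set gT}) \subset K.
    apply: (absR (z := g)) (group1 K); rewrite -au /pow_op -mulgA wE.
    by rewrite -{2}(lcoset1 K') coset_mul ?group1 // mulg1.
  have eK : (K' : {set gT}) = K by apply/eqP; rewrite eqEsubset s1 s2.
  by apply/GoodP; exists z; rewrite -?eK.
case/andP=> /orP[/eqP<- _|/existsP[a /eqP au]]; first by apply/GoodP; exists g.
case/orP=> [/eqP->|/existsP[b /eqP bw]]; first by apply/GoodP; exists g.
case: (grpU_pow wU) => [w0|[K' [z [zN wE]]]].
  by move: au; rewrite w0 /pow_op mul0s => /setP/(_ g); rewrite inE mem_lcoset mulVg group1.
have s1 : (K : {set gT}) \subset K'.
  apply: (absL (z := z)) (group1 K'); rewrite norm_rlcoset // -wE -bw /pow_op mulgA.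
  by rewrite -{1}(lcoset1 K) coset_mul // mul1g.
have s2 : (K' : {set gT}) \subset K.
  apply: (absL (z := g)) (group1 K); rewrite norm_rlcoset // -au /pow_op mulgA wE.
  by rewrite -{1}(lcoset1 K') coset_mul // mul1g.
have eK : (K' : {set gT}) = K by apply/eqP; rewrite eqEsubset s1 s2.
by apply/GoodP; exists z; rewrite -?eK.
Qed.
End Coset.

Lemma part1 (X : {set gT}) : X \in grpU opP ->
  sdivides (@block_op {set gT} opP X) (@mulg gT).
Proof.
move=> XU; have XT : X \in blockT opP X.
  apply: (subsetP (gen_ext _ _)); rewrite inE /rho; apply/and3P; split => //; exact: connect0.
case: (grpU_pow XU) => [X0|[K [x [xN XE]]]].
  have TS : blockT opP X \subset [set set0].
    apply: gen_sub.
      by apply/forall_inP=> a /set1P-> ; apply/forall_inP=> b /set1P->; rewrite /pow_op mul0s inE.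
    apply/subsetP=> y; rewrite /rho_class in_set /rho => /and3P[_ _ cy]; rewrite X0 in cy.
    apply: (connect_inv (P := fun y => y \in [set set0]) _ cy); last by rewrite inE.
    move=> u w /and3P[_ _ e] /set1P uE; rewrite {}uE in e; apply/set1P.
    case/orP: e => /andP[_ /orP[/eqP //|/existsP[a /eqP <-]]]; by rewrite /pow_op ?muls0 ?mul0s.
  have TX y : y \in blockT opP X -> y = X by move=> /(subsetP TS) /set1P ->.
  apply: (@gen_div _ _ X gT [set: gT] (fun _ => X) 1) => //.
  - by apply/forall_inP=> *; apply/forall_inP=> *; rewrite inE.
  - by move=> y /TX ->; apply: greenD_refl.
  - by move=> *; rewrite /pow_op X0 mul0s.
  - by move=> y /TX ->; exists 1; rewrite ?inE.
have XG : X \in Good K by apply/GoodP; exists x.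
have TG : blockT opP X \subset Good K.
  apply: gen_sub; first exact: Good_closed.
  apply/subsetP=> y; rewrite /rho_class in_set /rho => /and3P[_ _ cy].
  exact: (connect_inv (P := fun y => y \in Good K) (fun u w e Pu => @Good_edge K u w Pu e) cy XG).
apply: (@gen_div _ _ X gT 'N(K) (fun g => g *: K) 1) => //.
- by apply/forall_inP=> a aN; apply/forall_inP=> b bN; rewrite groupM.
- move=> y /(subsetP TG) /GoodP[g _ ->]; apply/existsP; exists X.
  by rewrite XE greenL_cosets greenR_refl.
- move=> u uN; have uU : u *: K \in grpU opP by apply: (@Good_U K); apply/GoodP; exists u.
  apply: (subsetP (gen_ext _ _)); rewrite /rho_class in_set /rho; apply/and3P; split => //.
  by apply: connect1; rewrite /rho_edge /=; apply/and3P; split => //; rewrite XE greenL_cosets.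
- by move=> u v _ vN; rewrite /pow_op coset_mul.
- by move=> y /(subsetP TG) /GoodP[g gN ->]; exists g.
Qed.
End Part1.
Section Pow.
Variables (T : finType) (o : T -> T -> T).
Hypothesis oA : associative o.

Definition spw a k := iter k (o a) a.

Lemma spw_add a i j : o (spw a i) (spw a j) = spw a (i + j).+1.
Proof. by elim: i => [|i IH] //=; rewrite -oA /spw /= -/(spw a i) IH. Qed.

Lemma spw_closed (B : {set T}) a k : op_closed o B -> a \in B -> spw a k \in B.
Proof.
move=> /forall_inP cB aB; elim: k => [|k IH] //=.
by move: (cB a aB) => /forall_inP; apply.
Qed.

Lemma spw_idem e k : o e e = e -> spw e k = e.
Proof. by move=> ee; elim: k => [|k IH] //=; rewrite /spw /= -/(spw e k) IH. Qed.

Lemma spw_period a i j : spw a i = spw a j -> forall t, spw a (i + t) = spw a (j + t).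
Proof.
move=> E t; elim: t => [|t IH]; first by rewrite !addn0.
by rewrite !addnS /spw /= -!/(spw a _) IH.
Qed.

Lemma idem_pow a : exists k, o (spw a k) (spw a k) = spw a k.
Proof.
pose f (i : 'I_#|T|.+1) := spw a i.
have : ~~ injectiveb f.
  apply/negP => /injectiveP inj; have := leq_card f inj.
  by rewrite card_ord ltnn.
case/injectivePn => i [j nij fij].
have [i' [d [dpos Ei]]] : exists i' d, 0 < d /\ spw a i' = spw a (i' + d).
  case: (ltngtP i j) nij => [ij|ji|/val_inj->]; last by rewrite eqxx.
  - by exists i, (j - i); split; [rewrite subn_gt0 | rewrite subnKC 1?ltnW].
  - by exists j, (i - j); split; [rewrite subn_gt0 | rewrite subnKC 1?ltnW].
have per c t : spw a (i' + t + c * d) = spw a (i' + t).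
  elim: c => [|c IH]; first by rewrite mul0n addn0.
  have -> : i' + t + c.+1 * d = (i' + d) + (t + c * d) by lia.
  by rewrite -(spw_period Ei) addnA IH.
exists ((i'.+1 * d).-1 ); rewrite spw_add.
have H : i' <= (i'.+1 * d).-1 by move: dpos; clear; nia.
have -> : ((i'.+1 * d).-1 + (i'.+1 * d).-1).+1 = i' + ((i'.+1 * d).-1 - i') + i'.+1 * d.
  move: H dpos; clear; nia.
rewrite per; congr spw; lia.
Qed.

Lemma spw_hom (T2 : finType) (o2 : T2 -> T2 -> T2) (V : {set T}) (phi : T -> T2) a k :
  op_closed o V -> (forall u v, u \in V -> v \in V -> phi (o u v) = o2 (phi u) (phi v)) ->
  a \in V -> phi (spw a k) = iter k (o2 (phi a)) (phi a).
Proof.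
move=> cV hom aV; elim: k => [|k IH] //=.
by rewrite -/(spw a k) hom ?IH // spw_closed.
Qed.
End Pow.
Section StepA.
Variables (S : finType) (op : S -> S -> S).
Hypothesis opA : associative op.
Hypothesis bg : forall e f, op e e = e -> op f f = f ->
  exists r, spw op (op e f) r = spw op (op f e) r.

Lemma bgL e f : op e e = e -> op f f = f -> op e f = e -> op f e = f -> e = f.
Proof.
move=> ee ff ef fe; have [r] := bg ee ff.
by rewrite ef fe !spw_idem.
Qed.

Lemma bgR e f : op e e = e -> op f f = f -> op f e = e -> op e f = f -> e = f.
Proof.
move=> ee ff fe ef; have [r] := bg ee ff.
by rewrite ef fe !spw_idem // => ->.
Qed.

Lemma stepA x : x \in grpU op -> exists e, exists Gr : {set S},
  op e e = e /\ op_closed op Gr /\ x \in Gr /\ blockT op x \subset Gr /\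
      (forall y, y \in Gr -> greenD op y x) /\
      (forall g, g \in Gr -> op g g = g -> g = e) /\
      (forall y, y \in Gr -> op e y = y /\ op y e = y).
Proof.
move=> xU; move: (xU); rewrite inE => /existsP [A /andP [xA /andP[_ /exists_inP [e eA /andP [idE invE]]]]].
move: (idE) => /forall_inP /(_ x xA) /andP [/eqP ex /eqP xe].
move: (idE) => /forall_inP /(_ e eA) /andP [/eqP ee _].
move: invE => /forall_inP /(_ x xA) /exists_inP [x' _ /andP[/eqP xx' /eqP x'x]].
pose Gr := [set y | [&& op e y == y, op y e == y & [exists z, (op y z == e) && (op z y == e)]]].
have GrP y : reflect [/\ op e y = y, op y e = y & exists z, op y z = e /\ op z y = e] (y \in Gr).
  rewrite inE; apply: (iffP and3P) => [[/eqP a /eqP b /existsP[z /andP[/eqP c /eqP d]]]|[a b [z [c d]]]].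
    by split=> //; exists z.
  by rewrite a b !eqxx; split=> //; apply/existsP; exists z; rewrite c d !eqxx.
have xGr : x \in Gr by apply/GrP; split=> //; exists x'.
have Grc : op_closed op Gr.
  apply/forall_inP=> a /GrP[ea ae [za [aza zaa]]]; apply/forall_inP=> b /GrP[eb be [zb [bzb zbb]]].
  apply/GrP; split; first by rewrite opA ea.
    by rewrite -opA be.
  exists (op zb za); split.
    by rewrite -opA (opA b) bzb (opA a) ae aza.
  by rewrite -opA (opA za) zaa eb zbb.
have Gri g : g \in Gr -> op g g = g -> g = e.
  case/GrP=> eg ge [z [gz zg]] gg.
  have : op (op z g) g = e by rewrite -opA gg zg.
  by rewrite zg eg.
have GrD y : y \in Gr -> greenD op y x.
  case/GrP=> ey ye [z [yz zy]]; apply/existsP; exists y.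
  rewrite /greenL /lmult eqxx /=; apply/andP; split; apply/orP; right; apply/existsP.
    by exists (op x' y); rewrite opA xx' ey.
  by exists (op z x); rewrite opA yz ex.
have Gre u w : rho_edge op u w -> u \in Gr -> w \in Gr.
  case/and3P=> _ wU eu uGr; case/GrP: (uGr) => eu' ue [z [uz zu]].
  move: wU; rewrite inE => /existsP [B /andP [wB /andP[_ /exists_inP [f fB /andP [idF invF]]]]].
  move: (idF) => /forall_inP /(_ w wB) /andP [/eqP fw /eqP wf].
  move: (idF) => /forall_inP /(_ f fB) /andP [/eqP ff _].
  move: invF => /forall_inP /(_ w wB) /exists_inP [w' _ /andP[/eqP ww' /eqP w'w]].
  have wGr : e = f -> w \in Gr by move=> ef; apply/GrP; rewrite ef; split=> //; exists w'.
  case/orP: eu => /andP[].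
    case/orP=> [/eqP <- //|/existsP[a /eqP au]].
    case/orP=> [/eqP -> //|/existsP[b /eqP bw]].
    apply: wGr; apply: bgL => //.
      have uf : op u f = u by rewrite -au -opA wf.
      by rewrite -zu -opA uf.
    have we : op w e = w by rewrite -bw -opA ue.
    by rewrite -w'w -opA we.
  case/orP=> [/eqP <- //|/existsP[a /eqP au]].
  case/orP=> [/eqP -> //|/existsP[b /eqP bw]].
  apply: wGr; apply: bgR => //.
    have fu : op f u = u by rewrite -au opA fw.
    by rewrite -uz opA fu.
  have ew : op e w = w by rewrite -bw opA eu'.
  by rewrite -ww' opA ew.
exists e, Gr; do 3!split=> //; split; last first.
  by split=> //; split=> // y /GrP[].
apply: gen_sub => //; apply/subsetP=> y; rewrite /rho_class in_set /rho => /and3P[_ _ cy].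
exact: (connect_inv (P := fun y => y \in Gr) Gre cy xGr).
Qed.
End StepA.
Section SetL.
Variable gT : finGroupType.
Implicit Types A B C : {set gT}.
Local Notation P := (@pow_op gT).

Lemma spw_set0 k : spw P set0 k = set0.
Proof. by elim: k => [|k IH] //=; rewrite /pow_op mul0s. Qed.

Lemma card_mulr A B : A != set0 -> #|B| <= #|A * B|.
Proof.
case/set0Pn=> a aA; rewrite -(card_lcoset B a); apply: subset_leq_card.
by rewrite mulSg // sub1set.
Qed.

Lemma spw_nonempty A k : A != set0 -> spw P A k != set0.
Proof.
move=> An0; elim: k => [|k IH] //=; rewrite -/(spw P A k) /pow_op.
case/set0Pn: An0 => a aA; case/set0Pn: IH => b bA; apply/set0Pn; exists (a * b).
exact: mem_mulg.
Qed.

Lemma spw_card A k : A != set0 -> #|A| <= #|spw P A k|.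
Proof.
move=> An0; elim: k => [|k IH] //=; rewrite -/(spw P A k) /pow_op.
exact: leq_trans IH (card_mulr _ An0).
Qed.

Lemma spw_expg C k : spw P C k = C ^+ k.+1.
Proof.
elim: k => [|k IH]; first by [].
by rewrite /spw /= -/(spw P C k) IH /pow_op.
Qed.

Lemma spw_gen C : 1 \in C -> {m | forall r, m <= r -> spw P C r = <<C>>}.
Proof.
move=> C1; have [m Em] := gen_expgs C.
have e1C : 1 |: C = C by apply/setUidPr; rewrite sub1set.
rewrite e1C in Em; exists m => r mr; apply/eqP; rewrite eqEsubset; apply/andP; split.
  rewrite spw_expg; elim: r.+1 => [|j IH]; first by rewrite expg0 sub1G.
  by rewrite expgS mul_subG ?subset_gen.
rewrite Em spw_expg; have mono j : C ^+ j \subset C ^+ j.+1.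
  by rewrite expgS -{1}(mul1g (C ^+ j)) mulSg // sub1set.
have mt t : C ^+ m \subset C ^+ (m + t).
  elim: t => [|t IH]; first by rewrite addn0.
  by rewrite addnS (subset_trans IH (mono _)).
by rewrite -(subnKC (leq_trans mr (leqnSn r))) mt.
Qed.

Lemma bg_bound A B : A * A = A -> B * B = B ->
  {R | forall r, R <= r -> spw P (P A B) r = spw P (P B A) r}.
Proof.
move=> AA BB.
have [A0|An0] := eqVneq A set0.
  by exists 0 => r _; rewrite /pow_op A0 mul0s muls0.
have [B0|Bn0] := eqVneq B set0.
  by exists 0 => r _; rewrite /pow_op B0 mul0s muls0.
have gA := idem_group AA An0; have gB := idem_group BB Bn0.
have A1 : 1 \in A by case/andP: gA.
have B1 : 1 \in B by case/andP: gB.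
have AB1 : 1 \in A * B by have := mem_mulg A1 B1; rewrite mulg1.
have BA1 : 1 \in B * A by have := mem_mulg B1 A1; rewrite mulg1.
have [m1 E1] := spw_gen AB1.
have [m2 E2] := spw_gen BA1.
have AsBA : A \subset B * A by rewrite -{1}(mul1g A) mulSg // sub1set.
have BsBA : B \subset B * A by rewrite -{1}(mulg1 B) mulgS // sub1set.
have AsAB : A \subset A * B by rewrite -{1}(mulg1 A) mulgS // sub1set.
have BsAB : B \subset A * B by rewrite -{1}(mul1g B) mulSg // sub1set.
have eG : <<A * B>> = <<B * A>>.
  apply/eqP; rewrite eqEsubset !gen_subG.
  by rewrite !mul_subG ?(subset_trans _ (subset_gen _)).
exists (m1 + m2) => r le; rewrite /pow_op E1 ?E2 ?eG //.
  by apply: leq_trans le; rewrite leq_addl.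
by apply: leq_trans le; rewrite leq_addr.
Qed.
End SetL.

Section WL.
Variables (n : nat) (Gs : 'I_n -> finGroupType).
Local Notation W := (powprod_car Gs).
Local Notation opW := (@powprod_op n Gs).

Lemma opWA : associative opW.
Proof. by move=> a b c; apply/ffunP=> i; rewrite !ffunE /pow_op mulgA. Qed.

Lemma opW_spw (m : W) k i : spw opW m k i = spw (@pow_op (Gs i)) (m i) k.
Proof. by elim: k => [|k IH] //=; rewrite ffunE -/(spw opW m k) IH. Qed.

Lemma W_bg (E F : W) : opW E E = E -> opW F F = F ->
  exists r, spw opW (opW E F) r = spw opW (opW F E) r.
Proof.
move=> EE FF.
have EEi i : E i * E i = E i by move/ffunP: EE => /(_ i); rewrite ffunE.
have FFi i : F i * F i = F i by move/ffunP: FF => /(_ i); rewrite ffunE.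
exists (\sum_i sval (bg_bound (EEi i) (FFi i))).
apply/ffunP=> i; rewrite !opW_spw !ffunE.
have := svalP (bg_bound (EEi i) (FFi i)); apply.
by rewrite (bigD1 i) //= leq_addr.
Qed.
End WL.
Lemma prod_pack (H : finGroupType -> Prop) : group_pseudovariety H ->
  forall n (Gs : 'I_n -> finGroupType), (forall i, H (Gs i)) ->
  exists Gam : finGroupType, H Gam /\
    exists (pi : forall i, Gam -> Gs i) (tup : (forall i, Gs i) -> Gam),
      (forall i (a b : Gam), pi i (a * b) = pi i a * pi i b) /\
      (forall g i, pi i (tup g) = g i).
Proof.
case=> [[G0 HG0] _ Hprod]; elim=> [|n IH] Gs HGs.
  exists G0; split=> //; exists (fun i : 'I_0 => False_rect _ ((fun E : false = true => ltac:(discriminate E)) (ltn_ord i))), (fun _ => 1).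
  by split=> [[m lt]|g [m lt]].
have [Gam' [HGam' [pi' [tup' [piM tupE]]]]] :=
  IH (fun j => Gs (lift ord0 j)) (fun j => HGs _).
pose Gam := (Gs ord0 * Gam')%type.
pose pi (i : 'I_n.+1) (p : Gam) : Gs i :=
  match unliftP ord0 i with
  | UnliftSome j E => eq_rect_r Gs (pi' j p.2) E
  | UnliftNone E => eq_rect_r Gs p.1 E
  end.
exists Gam; split; first exact: Hprod.
exists pi, (fun g => (g ord0, tup' (fun j => g (lift ord0 j)))); split.
  move=> i a b; rewrite /pi; case: (unliftP ord0 i) => [j|] E; subst i => /=.
    by rewrite piM.
  by [].
move=> g i; rewrite /pi; case: (unliftP ord0 i) => [j|] E; subst i => /=.
  by rewrite tupE.
by [].
Qed.
Lemma clo (T : finType) (o : T -> T -> T) (B : {set T}) a b :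
  op_closed o B -> a \in B -> b \in B -> o a b \in B.
Proof. by move=> /forall_inP /(_ a) H aB bB; move: (H aB) => /forall_inP; apply. Qed.

Lemma norm_rl (gT : finGroupType) (A : {set gT}) h : h \in 'N(A) -> A :* h = h *: A.
Proof. by move/normP; rewrite conjsgE => E; rewrite -{2}E lcosetKV. Qed.

Lemma coset_mulS (gT : finGroupType) (K : {set gT}) g h : K * K = K -> h \in 'N(K) ->
  (g *: K) * (h *: K) = (g * h) *: K.
Proof.
move=> KK hN; rewrite -mulgA [K * _]mulgA (norm_rl hN) -mulgA KK.
by rewrite lcosetM.
Qed.

Lemma sum_eq_pw (I : finType) (a b : I -> nat) :
  (forall i, a i <= b i) -> \sum_i b i <= \sum_i a i -> forall i, a i = b i.
Proof.
move=> ab le i; apply/eqP; rewrite eqn_leq ab /=.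
move: le; rewrite (bigD1 i) //= [X in _ <= X](bigD1 i) //= => le.
have : \sum_(j | j != i) a j <= \sum_(j | j != i) b j by apply: leq_sum => j _.
move: le; clear; lia.
Qed.

Section StepB.
Variables (S : finType) (op : S -> S -> S).
Hypothesis opA : associative op.
Variables (n : nat) (Gs : 'I_n -> finGroupType).
Local Notation W := (powprod_car Gs).
Local Notation opW := (@powprod_op n Gs).
Variables (V : {set W}) (phi : W -> S).
Hypothesis Vc : op_closed opW V.
Hypothesis phom : forall u v, u \in V -> v \in V -> phi (opW u v) = op (phi u) (phi v).
Hypothesis phion : forall a, exists2 u, u \in V & phi u = a.

Lemma S_bg e f : op e e = e -> op f f = f ->
  exists r, spw op (op e f) r = spw op (op f e) r.
Proof.
move=> ee ff; have [a aV ae] := phion e; have [b bV bf] := phion f.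
have [ka ka_id] := idem_pow (@opWA n Gs) a; have [kb kb_id] := idem_pow (@opWA n Gs) b.
set ea := spw opW a ka in ka_id; set eb := spw opW b kb in kb_id.
have eaV : ea \in V by apply: spw_closed.
have ebV : eb \in V by apply: spw_closed.
have pea : phi ea = e by rewrite /ea (spw_hom _ Vc phom aV) ae -/(spw op e ka) spw_idem.
have peb : phi eb = f by rewrite /eb (spw_hom _ Vc phom bV) bf -/(spw op f kb) spw_idem.
have [r Er] := W_bg ka_id kb_id; exists r.
have := congr1 phi Er; rewrite !(spw_hom _ Vc phom) ?clo //.
by rewrite !phom // pea peb.
Qed.

Lemma stepB (e : S) (Gr : {set S}) (x : S) : op e e = e -> op_closed op Gr -> x \in Gr ->
  (forall g, g \in Gr -> op g g = g -> g = e) ->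
  (forall y, y \in Gr -> op e y = y /\ op y e = y) ->
  forall (Gam : finGroupType) (pi : forall i, Gam -> Gs i) (tup : (forall i, Gs i) -> Gam),
  (forall i (a b : Gam), pi i (a * b) = pi i a * pi i b) ->
  (forall g i, pi i (tup g) = g i) ->
  exists (V' : {set Gam}) (psi : Gam -> S),
    op_closed (@mulg Gam) V' /\ (forall u, u \in V' -> psi u \in Gr) /\
    (forall u v, u \in V' -> v \in V' -> psi (u * v) = op (psi u) (psi v)) /\
    (forall y, y \in Gr -> exists2 u, u \in V' & psi u = y).
Proof.
move=> ee Grc xGr Gri eGr Gam pi tup piM tupE.
pose M := [set w in V | phi w \in Gr].
have Mc : op_closed opW M.
  apply/forall_inP=> a; rewrite inE => /andP[aV aG]; apply/forall_inP=> b; rewrite inE => /andP[bV bG].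
  by rewrite inE clo // phom // clo.
pose Idm := [set w in M | opW w w == w].
have [m0 m0V m0x] := phion x.
have m0M : m0 \in M by rewrite inE m0V m0x.
have [k0 k0_id] := idem_pow (@opWA n Gs) m0.
have w0I : spw opW m0 k0 \in Idm by rewrite inE spw_closed // k0_id eqxx.
pose Big := (\sum_i #|Gs i|).+1.
pose sz (w : W) := \sum_i #|w i|.
have szB w : sz w < Big by rewrite ltnS; apply: leq_sum => i _; apply: max_card.
pose supp (w : W) := [set i | w i != set0].
pose mu w := #|supp w| * Big + (Big - sz w).
have [F FI Fmin] : exists2 F, F \in Idm & forall w, w \in Idm -> mu F <= mu w.
  by case: (@arg_minnP _ _ (fun w => w \in Idm) mu w0I) => F FI Fmin; exists F.
move: FI; rewrite inE => /andP[FM /eqP FF].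
have Fi i : F i * F i = F i by move/ffunP: FF => /(_ i); rewrite ffunE.
have phiF : phi F = e.
  move: FM; rewrite inE => /andP[FV FG]; apply: Gri => //.
  by rewrite -phom // FF.
pose N := [set m in M | (opW F m == m) && (opW m F == m)].
have claim m : m \in N -> forall i, (F i = set0 -> m i = set0) /\
    (F i != set0 -> exists2 g, g \in 'N(F i) & m i = g *: F i).
  rewrite inE => /and3P[mM /eqP Fm /eqP mF].
  have Fmi i : F i * m i = m i by move/ffunP: Fm => /(_ i); rewrite ffunE.
  have mFi i : m i * F i = m i by move/ffunP: mF => /(_ i); rewrite ffunE.
  have [k k_id] := idem_pow (@opWA n Gs) m.
  set F' := spw opW m k in k_id.
  have F'I : F' \in Idm by rewrite inE spw_closed // k_id eqxx.
  have FF' j : opW F (spw opW m j) = spw opW m j.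
    elim: j => [|j IH] //=; by rewrite opWA Fm.
  have F'F j : opW (spw opW m j) F = spw opW m j.
    elim: j => [|j IH] //=; by rewrite -opWA -/(spw opW m j) IH.
  have FF'i i : F i * F' i = F' i by move/ffunP: (FF' k) => /(_ i); rewrite ffunE.
  have F'Fi i : F' i * F i = F' i by move/ffunP: (F'F k) => /(_ i); rewrite ffunE.
  have F'F'i i : F' i * F' i = F' i by move/ffunP: k_id => /(_ i); rewrite ffunE.
  have sF'F : supp F' \subset supp F.
    apply/subsetP=> i; rewrite !inE; apply: contraNN => /eqP F0.
    by rewrite -FF'i F0 mul0s.
  have sFF' i : F' i != set0 -> F i \subset F' i.
    move=> nz; have := idem_group (F'F'i i) nz => /andP[F'1 _].
    apply/subsetP=> a aF; rewrite -F'Fi -[a]mul1g; exact: mem_mulg.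
  have muF := Fmin _ F'I.
  have suppE : supp F' = supp F.
    apply/eqP; rewrite eqEcard sF'F /=; rewrite leqNgt; apply/negP => lt.
    move: muF; rewrite /mu; have := szB F; have := szB F'.
    have : (#|supp F'| + 1) * Big <= #|supp F| * Big by rewrite leq_mul2r addn1 lt orbT.
    clear; nia.
  have neE i : (F' i != set0) = (F i != set0).
    by move/setP: suppE => /(_ i); rewrite !inE.
  have cle i : #|F i| <= #|F' i|.
    case: (eqVneq (F i) set0) => [->|nz]; first by rewrite cards0.
    by apply: subset_leq_card; apply: sFF'; rewrite neE.
  have szle : sz F' <= sz F.
    move: muF; rewrite /mu suppE; have := szB F; have := szB F'; clear; lia.
  have ceq := sum_eq_pw cle szle.
  have F'E : F' = F.
    apply/ffunP=> i; case: (eqVneq (F i) set0) => [F0|nz].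
      by apply/eqP; move: (neE i); rewrite F0 eqxx /= => /negbFE.
    by apply/eqP; rewrite eq_sym eqEcard sFF' ?neE //= -ceq leqnn.
  have mk i : spw (@pow_op (Gs i)) (m i) k = F i by rewrite -opW_spw -/F' F'E.
  move=> i; split.
    by move=> F0; rewrite -Fmi F0 mul0s.
  move=> nz; have mnz : m i != set0.
    apply/eqP=> mi0; move: (mk i); rewrite mi0 spw_set0 => E; by rewrite -E eqxx in nz.
  case/set0Pn: (mnz) => g gm.
  have cm : #|m i| <= #|F i| by rewrite -(mk i) spw_card.
  have mE : m i = g *: F i.
    apply/eqP; rewrite eq_sym eqEcard card_lcoset cm andbT.
    by rewrite -(mFi i) mulSg // sub1set.
  exists g => //; apply/normP; rewrite conjsgE.
  have -> : F i :* g = g *: F i.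
    apply/eqP; rewrite eqEcard card_rcoset card_lcoset leqnn andbT -mE.
    by rewrite -(Fmi i) mulgS // sub1set.
  by rewrite lcosetK.
pose c (u : Gam) : W := [ffun i => if F i == set0 then set0 else pi i u *: F i].
pose V' := [set u | [forall i, (F i != set0) ==> (pi i u \in 'N(F i))] && (c u \in N)].
have V'P u : u \in V' -> (forall i, F i != set0 -> pi i u \in 'N(F i)) /\ c u \in N.
  rewrite inE => /andP[/forallP H cN]; split=> // i nz; exact: (implyP (H i) nz).
have NM m : m \in N -> m \in M by rewrite inE => /andP[].
have MV m : m \in M -> m \in V by rewrite inE => /andP[].
have cM u v : u \in V' -> v \in V' -> c (u * v) = opW (c u) (c v).
  move=> /V'P[uN _] /V'P[vN _]; apply/ffunP=> i; rewrite !ffunE.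
  case: ifP => [_|/negbT nz]; first by rewrite /pow_op mul0s.
  by rewrite piM /pow_op coset_mulS ?Fi ?vN.
have Nc : op_closed opW N.
  apply/forall_inP=> a; rewrite inE => /and3P[aM /eqP Fa /eqP aF].
  apply/forall_inP=> b; rewrite inE => /and3P[bM /eqP Fb /eqP bF].
  by rewrite inE clo // opWA Fa -opWA bF !eqxx.
exists V', (fun u => phi (c u)); split.
  apply/forall_inP=> u uV; apply/forall_inP=> v vV.
  have [uN ucN] := V'P _ uV; have [vN vcN] := V'P _ vV.
  rewrite inE; apply/andP; split.
    by apply/forallP=> i; apply/implyP=> nz; rewrite piM groupM ?uN ?vN.
  by rewrite cM // clo.
split.
  by move=> u /V'P[_ /NM]; rewrite inE => /andP[].
split.
  move=> u v uV vV; rewrite cM // phom //.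
    by case/V'P: uV => _ /NM /MV.
  by case/V'P: vV => _ /NM /MV.
move=> y yG; have [m mV my] := phion y.
pose m' := opW (opW F m) F.
have FV : F \in V by apply: MV.
have m'V : m' \in V by rewrite /m' !clo.
have pm' : phi m' = y.
  rewrite /m' !phom ?clo // phiF my.
  by have [-> ->] := eGr _ yG.
have m'N : m' \in N.
  rewrite inE inE m'V pm' yG /= /m'.
  by rewrite !opWA FF -!opWA FF !eqxx.
have cl := claim _ m'N.
pose g i : Gs i := odflt 1 [pick h in 'N(F i) | m' i == h *: F i].
have gP i : F i != set0 -> g i \in 'N(F i) /\ m' i = g i *: F i.
  move=> nz; rewrite /g; case: pickP => [h /andP[hN /eqP ->]|none] //=.
  have [h hN hE] := (cl i).2 nz; move: (none h); by rewrite hN hE eqxx.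
have cE : c (tup g) = m'.
  apply/ffunP=> i; rewrite ffunE tupE; case: ifP => [/eqP F0|/negbT nz].
    by rewrite ((cl i).1 F0).
  by rewrite (gP i nz).2.
exists (tup g); last by rewrite cE.
rewrite inE cE m'N andbT; apply/forallP=> i; apply/implyP=> nz.
by rewrite tupE (gP i nz).1.
Qed.
End StepB.

Lemma part2 (H : finGroupType -> Prop) : group_pseudovariety H ->
  forall (S : finType) (op : S -> S -> S), associative op -> inPH H op -> inBH H op.
Proof.
move=> hpv S op opA [n [Gs [HGs [V [Vc [phi [phom phion]]]]]]] x xU.
have bg := S_bg Vc phom phion.
have [e [Gr [ee [Grc [xGr [TGr [GrD [Gri eGr]]]]]]]] := stepA opA bg xU.
have [Gam [HGam [pi [tup [piM tupE]]]]] := prod_pack hpv HGs.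
have [V' [psi [V'c [psiG [psiM psion]]]]] :=
  stepB Vc phom phion ee Grc xGr Gri eGr piM tupE.
exists Gam; split=> //.
have xT : x \in blockT op x.
  apply: (subsetP (gen_ext _ _)); rewrite /rho_class in_set /rho; apply/and3P; split => //; exact: connect0.
have [u0 u0V u0x] := psion _ xGr.
apply: (@gen_div _ _ x Gam [set u in V' | psi u \in blockT op x] psi u0).
- by rewrite inE u0V u0x xT.
- apply/forall_inP=> u; rewrite inE => /andP[uV uT]; apply/forall_inP=> v; rewrite inE => /andP[vV vT].
  by rewrite inE clo // psiM // gen_subsemigroup_closed.
- by move=> y /(subsetP TGr) /GrD.
- by move=> u; rewrite inE => /andP[].
- by move=> u v; rewrite !inE => /andP[uV _] /andP[vV _]; apply: psiM.
- move=> y yT; have [u uV uy] := psion _ (subsetP TGr _ yT).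
  by exists u; rewrite // inE uV uy yT.
Qed.

Theorem mainTheorem2 :
  (forall (gT : finGroupType) (X : {set gT}),
      X \in grpU (@pow_op gT) ->
      sdivides (@block_op {set gT} (@pow_op gT) X) (@mulg gT)) /\
  (forall H : finGroupType -> Prop, group_pseudovariety H ->
     forall (S : finType) (op : S -> S -> S), associative op ->
       inPH H op -> inBH H op).
Proof. split; [exact: part1 | exact: part2]. Qed.
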